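(* Let $T>0$ and let $y:[0,T]\to[0,+\infty)$ be continuous. Assume there exists $k\ge0$ such that $$y(t)\le k\int_0^t\frac{1}{s\sqrt{s}}\int_0^s y(\sigma)\,d\sigma\,ds\qquad\text{for every }t\in[0,T].$$ Then $y(t)=0$ for every $t\in[0,T]$. *)

(* Defs.v *)
From HB Require Import structures.
From mathcomp Require Export all_boot all_order all_algebra.
From mathcomp Require Export all_classical all_reals all_analysis.
Set Implicit Arguments.
Unset Strict Implicit.
Unset Printing Implicit Defensive.

(* Main.v *)
Require Import Defs.
From mathcomp Require Import all_boot all_order all_algebra.
From mathcomp Require Import all_classical all_reals all_analysis.
From mathcomp Require Import ring lra measurable_realfun.
Import Order.TTheory GRing.Theory Num.Theory numFieldNormedType.Exports.
Local Open Scope classical_set_scope.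
Local Open Scope ring_scope.

Section H.
Context {R : realType}.
Local Notation mu := (@lebesgue_measure R).

Lemma le_int_nomeas (D : set R) (f g : R -> \bar R) :
  (forall x, D x -> (0 <= f x)%E) -> (forall x, D x -> (f x <= g x)%E) ->
  (\int[mu]_(x in D) f x <= \int[mu]_(x in D) g x)%E.
Proof.
move=> f0 fg.
have g0 : forall x, D x -> (0 <= g x)%E.
  by move=> x Dx; apply: le_trans (f0 x Dx) (fg x Dx).
rewrite ge0_integralE // [X in (_ <= X)%E]ge0_integralE //.
apply: ereal_sup_le => _ [h hf <-]; exists h => //= x.
apply: (le_trans (hf x)); rewrite /patch; case: ifP => // /[!inE] Dx.
exact: fg.
Qed.

Lemma sqrt_sub (a t : R) : 0 <= a -> a <= t ->
  Num.sqrt t - Num.sqrt a <= Num.sqrt (t - a).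
Proof.
move=> a0 at_.
rewrite lerBlDl.
have h : t <= (Num.sqrt a + Num.sqrt (t - a)) ^+ 2.
  rewrite sqrrD !sqr_sqrtr ?subr_ge0 //.
  have : 0 <= Num.sqrt a * Num.sqrt (t - a) *+ 2.
    by rewrite mulrn_wge0 // mulr_ge0 // sqrtr_ge0.
  lra.
have := h; rewrite -(ler_sqrt t) ?sqrtr_sqr; last by rewrite sqr_ge0.
by rewrite ger0_norm // addr_ge0 // sqrtr_ge0.
Qed.

Definition hs (x : R) := (Num.sqrt x)^-1.

Lemma hs_cont x : 0 < x -> {for x, continuous hs}.
Proof.
move=> x0; apply: continuousV; first by rewrite gt_eqF // sqrtr_gt0.
exact: sqrt_continuous.
Qed.

Lemma hs_ge0 x : 0 <= hs x.
Proof. by rewrite /hs invr_ge0 sqrtr_ge0. Qed.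

Lemma hs_meas (A : set R) : A `<=` `]0, +oo[%classic -> measurable_fun A hs.
Proof.
move=> sA; apply: (measurable_funS _ sA) => //.
apply: open_continuous_measurable_fun; first exact: interval_open.
by move=> x; rewrite inE /= in_itv /= andbT => x0; exact: hs_cont.
Qed.

Lemma hs_FTC (e t : R) : 0 < e -> e < t ->
  (\int[mu]_(x in `[e, t]) (hs x)%:E = (2 * Num.sqrt t)%:E - (2 * Num.sqrt e)%:E)%E.
Proof.
move=> e0 et.
have dF (x : R) : 0 < x -> is_derive x 1 ((2:R) \*: (@Num.sqrt R)) (hs x).
  move=> x0; apply: is_derive_eq; first by apply: is_deriveZ; exact: is_derive1_sqrt.
  by rewrite /hs invfM scalerA mulfV ?scale1r.

apply: (continuous_FTC2 (F := (2:R) \*: (@Num.sqrt R))) => //.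
- apply: continuous_in_subspaceT => x; rewrite inE /= in_itv /= => /andP[ex _].
  exact: hs_cont (lt_le_trans e0 ex).
- split.
  + move=> x; rewrite in_itv /= => /andP[ex _].
    by have [] := dF x (lt_trans e0 ex).
  + apply: cvg_at_right_filter; apply: continuousZl_tmp; exact: sqrt_continuous.
  + apply: cvg_at_left_filter; apply: continuousZl_tmp; exact: sqrt_continuous.
- move=> x; rewrite in_itv /= => /andP[ex _].
  rewrite derive1E; apply: derive_val; exact: dF (lt_trans e0 ex).
Qed.

Lemma sing (a t : R) : 0 <= a -> a <= t ->
  (\int[mu]_(x in `]a, t]) (hs x)%:E <= (2 * Num.sqrt (t - a))%:E)%E.
Proof.
move=> a0; rewrite le_eqVlt => /predU1P[<-|at_].
  by rewrite set_itvoc0 integral_set0 lee_fin mulr_ge0 // sqrtr_ge0.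
pose e (n : nat) := a + (t - a) / n.+2%:R.
have ta0 : 0 < t - a by rewrite subr_gt0.
have ea n : a < e n by rewrite /e ltrDl divr_gt0.
have et n : e n < t.
  rewrite /e -ltrBrDl ltr_pdivrMr // ltr_pMr // ltr1n //.
pose F (n : nat) := `[e n, t]%classic.
have nd : nondecreasing_seq F.
  move=> n m nm; rewrite subsetEset => x; rewrite /F /= !in_itv /= => /andP[ex ->]; rewrite andbT.
  apply: le_trans ex; rewrite /e lerD2l ler_pM2l // lef_pV2 ?posrE // ler_nat.
  by rewrite ltnS.
have U : \bigcup_n F n = `]a, t]%classic.
  apply/seteqP; split => x.
    move=> [n _]; rewrite /F /= !in_itv /= => /andP[ex xt]; rewrite xt andbT.
    exact: lt_le_trans (ea n) ex.
  rewrite /= in_itv /= => /andP[ax xt].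
  exists (Num.truncn ((t - a) / (x - a))) => //=; rewrite /F /= in_itv /= xt andbT.
  rewrite /e -lerBrDl ler_pdivrMr // mulrC -ler_pdivrMr ?subr_gt0 //.
  apply: ltW; apply: lt_trans (truncnS_gt _) _.
  by rewrite ltr_nat.
have mF n : measurable (F n) by exact: measurable_itv.
have mf n : measurable_fun (F n) (fun x => (hs x)%:E).
  apply/measurable_EFinP; apply: hs_meas => x /=.
  rewrite !in_itv /= andbT => /andP[ex _].
  exact: lt_le_trans (le_lt_trans a0 (ea n)) ex.
have f0 n x : F n x -> (0 <= (hs x)%:E)%E by rewrite lee_fin hs_ge0.
have := ge0_nondecreasing_set_cvg_integral (mu := mu) nd mF mf f0.
rewrite U => /cvge_to_le; apply; apply: nearW => n.
have e0 : 0 < e n := le_lt_trans a0 (ea n).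
rewrite hs_FTC // -EFinB lee_fin -mulrBr ler_pM2l //.
apply: (le_trans (sqrt_sub _ _ (ltW e0) (ltW (et n)))).

rewrite ler_sqrt ?subr_ge0 ?(ltW at_) //.
by rewrite lerB // ltW.
Qed.
End H.
Theorem lemma3p3 (R : realType) (T : R) (y : R -> R) (k : R) :
  0 < T ->
  {within `[0, T]%classic, continuous y} ->
  (forall t, t \in `[0, T] -> 0 <= y t) ->
  0 <= k ->
  (forall t, t \in `[0, T] ->
     ((y t)%:E <= k%:E *
       \int[lebesgue_measure]_(s in `[0%R, t]%classic)
          (((s * Num.sqrt s)^-1)%:E *
           \int[lebesgue_measure]_(u in `[0%R, s]%classic) (y u)%:E))%E) ->
  forall t, t \in `[0, T] -> y t = 0.
Proof.
move=> T0 cy y0 k0 hyp.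
have inT u : 0 <= u -> u <= T -> u \in `[0, T] by move=> *; rewrite in_itv /=; apply/andP.
have y0' : y 0 = 0.
  have := hyp 0 (inT 0 (lexx 0) (ltW T0)).
  rewrite set_itv1 integral_set1 mule0 lee_fin => h.
  by apply/le_anti; rewrite h y0 // inT // ltW.
have my : measurable_fun `[0, T]%classic y.
  by apply: subspace_continuous_measurable_fun => //; exact: measurable_itv.
have Yge0 s : 0 <= s -> s <= T ->
    (0 <= \int[lebesgue_measure]_(u in `[0%R, s]%classic) (y u)%:E)%E.
  move=> s0 sT; apply: integral_ge0 => u /=; rewrite in_itv /= => /andP[u0 us].
  by rewrite lee_fin y0 // inT // (le_trans us).
pose r := (4 * (k + 1))^-1.
have r0 : 0 < r by rewrite /r invr_gt0 mulr_gt0 // ltr_pwDr.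
pose dl := r ^+ 2.
have dl0 : 0 < dl by rewrite /dl exprn_gt0.
have kr : k * (2 * r) <= 2^-1.
  have -> : k * (2 * r) = 2^-1 - 2^-1 * (k + 1)^-1.
    rewrite /r; field; rewrite ?lt0r_neq0 //; lra.
  have : 0 <= 2^-1 * (k + 1)^-1 :> R.
    by rewrite mulr_ge0 // invr_ge0 //; lra.
  lra.
have STEP a : 0 <= a -> a <= T -> (forall u, 0 <= u -> u <= a -> y u = 0) ->
    forall u, 0 <= u -> u <= a + dl -> u <= T -> y u = 0.
  move=> a0 aT ya.
  have [b [ab bT bad bu]] : exists b, [/\ a <= b, b <= T, b - a <= dl &
      forall u, u <= a + dl -> u <= T -> u <= b].
    have [adT|Tad] := lerP (a + dl) T.
      exists (a + dl); split => //; first by rewrite lerDl ltW.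
      by rewrite addrC addKr.
    by exists T; split => //; lra.
  have cyab : {within `[a, b]%classic, continuous y}.
    apply: continuous_subspaceW cy => u /=; rewrite !in_itv /= => /andP[au ub].
    by rewrite (le_trans a0 au) (le_trans ub bT).
  have [c cab cmax] := EVT_max ab cyab.
  move: (cab); rewrite in_itv /= => /andP[ac cb].
  set m := y c.
  have cT : c \in `[0, T] by rewrite inT // ?(le_trans a0 ac) ?(le_trans cb bT).
  have m0 : 0 <= m by exact: y0.
  have ym u : 0 <= u -> u <= b -> y u <= m.
    move=> u0 ub; have [ua|au] := lerP u a; first by rewrite ya.
    by apply: cmax; rewrite in_itv /= ub (ltW au).
  have Yz s : 0 <= s -> s <= a ->
      (\int[lebesgue_measure]_(u in `[0%R, s]%classic) (y u)%:E = 0)%E.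
    move=> s0 sa; transitivity (\int[lebesgue_measure]_(u in `[0%R, s]%classic) (cst 0%E u))%E; last exact: integral0.
    apply: eq_integral.
    move=> u; rewrite inE /= in_itv /= => /andP[u0 us].
    by rewrite ya // (le_trans us).
  have Yb s : a < s -> s <= b ->
      (\int[lebesgue_measure]_(u in `[0%R, s]%classic) (y u)%:E <= (m * (s - a))%:E)%E.
    move=> as_ sb.
    rewrite (@itv_bndbnd_setU _ _ (BLeft 0) (BRight a) (BRight s)); last 2 first.
      by rewrite bnd_simp.
      by rewrite bnd_simp ltW.
    rewrite ge0_integral_setU //=; last 3 first.
    - rewrite -itv_bndbnd_setU ?bnd_simp ?(ltW as_) //.
      apply/measurable_EFinP; apply: measurable_funS my => //.
      move=> u /=; rewrite !in_itv /= => /andP[-> us].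
      by rewrite (le_trans us) // (le_trans sb bT).
    - move=> u [|] /=; rewrite in_itv /= => /andP[u0 us]; rewrite lee_fin y0 // inT //.
      + exact: (le_trans us aT).
      + exact: (le_trans a0 (ltW u0)).
      + by rewrite (le_trans us) // (le_trans sb bT).
    - rewrite disj_set2E; apply/eqP/seteqP; split => // u /=.
      by rewrite !in_itv /= => -[/andP[_ ua] /andP[au _]]; move: (lt_le_trans au ua); rewrite ltxx.
    rewrite Yz // add0e.
    apply: le_trans (ge0_le_integral _ _ _ _ _ (f2 := cst m%:E) _) _.
    - exact: measurable_itv.
    - move=> u /=; rewrite in_itv /= => /andP[au us]; rewrite lee_fin y0 // inT //.
      + exact: (le_trans a0 (ltW au)).
      + by rewrite (le_trans us) // (le_trans sb bT).
    - apply/measurable_EFinP; apply: measurable_funS my => //.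
      move=> u /=; rewrite !in_itv /= => /andP[au us].
      by rewrite (le_trans a0 (ltW au)) (le_trans us) // (le_trans sb bT).
    - exact: measurable_cst.
    - move=> u /=; rewrite in_itv /= => /andP[au us]; rewrite lee_fin ym //.
      + exact: (le_trans a0 (ltW au)).
      + exact: (le_trans us sb).
    rewrite integral_cst; last exact: measurable_itv.
    set M := (X in (_ * X <= _)%E).
    have -> : M = (s - a)%:E.
      transitivity (lebesgue_measure (`]a, s]%classic : set R)); first by [].
      by rewrite lebesgue_measure_itv /= lte_fin as_ -EFinD.
    by rewrite -EFinM.
  have Phib : (\int[lebesgue_measure]_(s in `[0%R, c]%classic)
          (((s * Num.sqrt s)^-1)%:E *
           \int[lebesgue_measure]_(u in `[0%R, s]%classic) (y u)%:E) <= (m * (2 * r))%:E)%E.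
    rewrite integral_mkcond.
    apply: (@le_trans _ _ (\int[lebesgue_measure]_(x in setT) (((fun s => (m%:E * (hs s)%:E)) \_ `]a, c]%classic) x))%E).
      apply: le_int_nomeas => s _.
        rewrite patchE; case: ifPn => [|_ //]; rewrite inE /= in_itv /= => /andP[s0 sc].
        apply: mule_ge0; first by rewrite lee_fin invr_ge0 mulr_ge0 // sqrtr_ge0.
        by apply: Yge0 => //; rewrite (le_trans sc) // (le_trans cb bT).
      have rhs0 : (0 <= ((fun s => (m%:E * (hs s)%:E)) \_ `]a, c]%classic) s)%E.
        by rewrite patchE; case: ifPn => _ //; rewrite mule_ge0 // lee_fin ?hs_ge0.
      rewrite [X in (X <= _)%E]patchE; case: ifPn => [|_ //].
      rewrite inE /= in_itv /= => /andP[s0 sc].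
      have [sa|as_] := lerP s a; first by rewrite Yz // mule0.
      rewrite patchE ifT; last by rewrite inE /= in_itv /= as_ sc.
      apply: le_trans (lee_wpmul2l _ (Yb s as_ (le_trans sc cb))) _.
        by rewrite lee_fin invr_ge0 mulr_ge0 // sqrtr_ge0.
      rewrite -!EFinM lee_fin.
      have s0' : 0 < s := le_lt_trans a0 as_.
      have sq0 : 0 < Num.sqrt s by rewrite sqrtr_gt0.
      apply: (@le_trans _ _ ((s * Num.sqrt s)^-1 * (m * s))).
        rewrite ler_wpM2l ?invr_ge0 ?mulr_ge0 ?sqrtr_ge0 ?(ltW s0') //.
        by rewrite ler_wpM2l // gerBl.
      rewrite le_eqVlt; apply/orP; left; apply/eqP; rewrite /hs; field.
      by rewrite !lt0r_neq0.
    rewrite -integral_mkcond ge0_integralZl_EFin //; last 2 first.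
    - by move=> x _; rewrite lee_fin hs_ge0.
    - apply/measurable_EFinP; apply: hs_meas => x /=; rewrite !in_itv /= andbT => /andP[ax _].
      exact: le_lt_trans a0 ax.
    have m0E : (0 <= m%:E)%E by rewrite lee_fin.
    apply: le_trans (lee_wpmul2l m0E (sing a c a0 ac)) _.
    rewrite -EFinM lee_fin ler_wpM2l // ler_pM2l //.
    rewrite -(ger0_norm (ltW r0)) -sqrtr_sqr ler_sqrt ?sqr_ge0 //.
    by apply: le_trans bad; rewrite lerD2r.
  have hc := hyp c cT.
  have hm : m <= k * (m * (2 * r)).
    rewrite -lee_fin EFinM; apply: le_trans hc _; apply: lee_wpmul2l => //.
  have m00 : m = 0.
    have h1 : k * (m * (2 * r)) <= m * 2^-1 by rewrite mulrCA ler_wpM2l.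
    lra.
  move=> u u0 uad uT.
  have ub := bu u uad uT.
  have [ua|au] := lerP u a; first exact: ya.
  apply/le_anti; rewrite y0 ?inT // andbT -m00; apply: cmax.
  by rewrite in_itv /= ub (ltW au).
have P n : forall u, 0 <= u -> u <= n%:R * dl -> u <= T -> y u = 0.
  elim: n => [|n IH] u u0.
    by rewrite mul0r => u0' _; have -> : u = 0 by apply/le_anti; rewrite u0 u0'.
  have [ndT|Tnd] := lerP (n%:R * dl) T.
    move=> un uT; apply: (STEP (n%:R * dl)) => //.
    - by rewrite mulr_ge0 // ltW.
    - by move=> v v0 vn; apply: IH => //; exact: le_trans vn ndT.
    - by move: un; rewrite -natr1 mulrDl mul1r.
  by move=> _ uT; apply: IH => //; rewrite ltW // (le_lt_trans uT Tnd).
move=> t; rewrite in_itv /= => /andP[t0 tT].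
apply: (P (Num.truncn (T / dl)).+1) => //.
apply: (le_trans tT); rewrite -ler_pdivrMr // ltW //.
exact: truncnS_gt.
Qed.
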